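(* Let $\mathcal{Z}^\omega$ be the set of germs at $o=(0,0)$ of maps $F(x,y)=(f(x,y),x,y)$ into $\mathbf{R}^3_1$, with $f$ a real analytic function germ at $o$, $f(0,0)=0$, $f_x(0,0)=0$, $f_y(0,0)=1$, such that $A_F\equiv 0$, and let $\Lambda^\omega$ be the set of such germs (same normalizations) with $B_F\equiv 0$. For $F$ let $\gamma_F(x):=(f(x,0),f_y(x,0))$. Then $$\Lambda^\omega=\Big\{F\in\mathcal{Z}^\omega\ ;\ \gamma_F=\big(\psi,\sqrt{1-\dot\psi^2}\big)\ \text{for some }\psi\in C^\omega_o(\mathbf{R},0_2)\Big\},$$ where $\dot\psi=d\psi/dx$ and $C^\omega_o(\mathbf{R},0_2)$ is the set of germs at $0$ of real analytic functions $\psi$ with $\psi(0)=\psi'(0)=0$.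
   Context: $\mathbf{R}^3_1$ is Lorentz–Minkowski 3-space with coordinates $(t,x,y)$ and inner product $-dt^2+dx^2+dy^2$. For $F(x,y)=(f(x,y),x,y)$, $B_F:=1-f_x^2-f_y^2$ and $A_F:=(1-f_x^2)f_{yy}+2f_xf_yf_{xy}+(1-f_y^2)f_{xx}$. *)

(* Defs.v *)
From Stdlib Require Import Reals.
From Coquelicot Require Import Coquelicot.
Open Scope R_scope.

Definition analytic1_at0 (psi : R -> R) : Prop :=
  exists (r : R) (a : nat -> R), 0 < r /\
    forall x, Rabs x < r -> ex_pseries a x /\ psi x = PSeries a x.

Definition analytic2_at0 (f : R -> R -> R) : Prop :=
  exists (r : R) (a : nat -> nat -> R), 0 < r /\
    forall x y, Rabs x < r -> Rabs y < r ->
      (forall n, ex_series (fun m => Rabs (a n m) * Rabs x ^ n * Rabs y ^ m)) /\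
      ex_series (fun n => Series (fun m => Rabs (a n m) * Rabs x ^ n * Rabs y ^ m)) /\
      f x y = Series (fun n => Series (fun m => a n m * x ^ n * y ^ m)).

Definition fx (f : R -> R -> R) (x y : R) : R := Derive (fun t => f t y) x.
Definition fy (f : R -> R -> R) (x y : R) : R := Derive (fun s => f x s) y.
Definition fxx (f : R -> R -> R) (x y : R) : R := Derive (fun t => fx f t y) x.
Definition fyy (f : R -> R -> R) (x y : R) : R := Derive (fun s => fy f x s) y.
Definition fxy (f : R -> R -> R) (x y : R) : R := Derive (fun s => fx f x s) y.

Definition B_F (f : R -> R -> R) (x y : R) : R :=
  1 - (fx f x y) ^ 2 - (fy f x y) ^ 2.

Definition A_F (f : R -> R -> R) (x y : R) : R :=
  (1 - (fx f x y) ^ 2) * fyy f x y + 2 * fx f x y * fy f x y * fxy f x y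
  + (1 - (fy f x y) ^ 2) * fxx f x y.

Definition germ2_zero (g : R -> R -> R) : Prop :=
  exists eps, 0 < eps /\ forall x y, Rabs x < eps -> Rabs y < eps -> g x y = 0.

(* Main.v *)
Require Import Defs.
From Stdlib Require Import Reals Lra Psatz ClassicalEpsilon.
From Coquelicot Require Import Coquelicot.
Open Scope R_scope.

Lemma Series_zero : Series (fun _ => 0) = 0.
Proof.
  rewrite <- (Series_ext (fun n => 0 * 0)) by (intros; ring).
  rewrite Series_scal_l; ring.
Qed.

Lemma psum_term_le (a : nat -> R) m :
  (forall n, 0 <= a n) -> a m <= sum_f_R0 a m.
Proof.
  intros Ha. destruct m; simpl. lra.
  pose proof (cond_pos_sum a m Ha). lra.
Qed.

Lemma psum_le_series (a : nat -> R) N :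
  (forall n, 0 <= a n) -> ex_series a -> sum_f_R0 a N <= Series a.
Proof.
  intros Ha He.
  rewrite (Series_incr_n a (S N)) by (auto; lia). simpl pred.
  assert (0 <= Series (fun k => a (S N + k)%nat)).
  { rewrite <- Series_zero. apply Series_le. intros; split; [lra| apply Ha].
    apply (ex_series_incr_n a (S N)); auto. }
  lra.
Qed.

Lemma series_nonneg (a : nat -> R) :
  (forall n, 0 <= a n) -> ex_series a -> 0 <= Series a.
Proof.
  intros Ha He. rewrite <- Series_zero. apply Series_le; auto.
  intros; split; [lra| apply Ha].
Qed.

Lemma term_le_series (a : nat -> R) m :
  (forall n, 0 <= a n) -> ex_series a -> a m <= Series a.
Proof.
  intros. eapply Rle_trans. apply psum_term_le; auto. apply psum_le_series; auto.
Qed.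

Lemma series_tail_abs (b : nat -> R) M :
  ex_series (fun n => Rabs (b n)) ->
  Rabs (Series b - sum_f_R0 b M) <= Series (fun n => Rabs (b n)) - sum_f_R0 (fun n => Rabs (b n)) M.
Proof.
  intros H.
  assert (Hb : ex_series b) by (apply ex_series_Rabs; auto).
  rewrite (Series_incr_n b (S M)) by (auto; lia).
  rewrite (Series_incr_n (fun n => Rabs (b n)) (S M)) by (auto; lia).
  simpl pred.
  replace (sum_f_R0 b M + Series (fun k => b (S M + k)%nat) - sum_f_R0 b M)
    with (Series (fun k => b (S M + k)%nat)) by ring.
  replace (sum_f_R0 (fun n => Rabs (b n)) M + Series (fun k => Rabs (b (S M + k)%nat)) -
     sum_f_R0 (fun n => Rabs (b n)) M) with (Series (fun k => Rabs (b (S M + k)%nat))) by ring.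
  apply Series_Rabs.
  apply (ex_series_incr_n (fun n => Rabs (b n)) (S M)); auto.
Qed.

Lemma psum_cv (a : nat -> R) : ex_series a ->
  forall eps, 0 < eps -> exists N, forall M, (N <= M)%nat -> Rabs (sum_f_R0 a M - Series a) < eps.
Proof.
  intros H eps Heps.
  pose proof (Series_correct a H) as Hc. apply is_series_Reals in Hc.
  destruct (Hc eps Heps) as [N HN]. exists N. intros M HM. apply HN. lia.
Qed.

Lemma ex_series_le_R (a b : nat -> R) :
  (forall n, Rabs (a n) <= b n) -> ex_series b -> ex_series a.
Proof.
  intros H Hb. apply (@ex_series_le R_AbsRing R_CompleteNormedModule a b); auto.
Qed.


Section Fub.
Variable b : nat -> nat -> R.
Hypothesis H1 : forall n, ex_series (fun m => Rabs (b n m)).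
Hypothesis H2 : ex_series (fun n => Series (fun m => Rabs (b n m))).
Let s n := Series (fun m => Rabs (b n m)).

Lemma s_nonneg n : 0 <= s n.
Proof. apply series_nonneg; auto. intros; apply Rabs_pos. Qed.

Lemma b_le_s n m : Rabs (b n m) <= s n.
Proof. apply (term_le_series (fun m => Rabs (b n m))); auto. intros; apply Rabs_pos. Qed.

Lemma fub_col m : ex_series (fun n => Rabs (b n m)).
Proof.
  apply (ex_series_le_R _ s); auto. intros n.
  rewrite Rabs_Rabsolu. apply b_le_s.
Qed.

Lemma fub_row n : ex_series (b n).
Proof. apply ex_series_Rabs; auto. Qed.

Lemma psum_row_le n M : Rabs (sum_f_R0 (b n) M) <= s n.
Proof.
  eapply Rle_trans. apply sum_f_R0_triangle.
  apply (psum_le_series (fun m => Rabs (b n m))); auto. intros; apply Rabs_pos.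
Qed.

Lemma ex_series_psum M : ex_series (fun n => sum_f_R0 (b n) M).
Proof.
  apply (ex_series_le_R _ s); auto. intros n. apply psum_row_le.
Qed.

Lemma ex_series_rowsum : ex_series (fun n => Series (b n)).
Proof.
  apply (ex_series_le_R _ s); auto. intros n.
  apply Series_Rabs; auto.
Qed.

Lemma sum_series_swap M :
  sum_f_R0 (fun m => Series (fun n => b n m)) M = Series (fun n => sum_f_R0 (b n) M).
Proof.
  induction M; simpl. reflexivity.
  rewrite IHM. rewrite <- Series_plus. reflexivity.
  apply ex_series_psum. apply ex_series_Rabs, fub_col.
Qed.

Let rho M n := s n - sum_f_R0 (fun m => Rabs (b n m)) M.

Lemma rho_nonneg M n : 0 <= rho M n.
Proof.
  unfold rho. pose proof (psum_le_series (fun m => Rabs (b n m)) M (fun _ => Rabs_pos _) (H1 n)).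
  unfold s. lra.
Qed.

Lemma rho_le M n : rho M n <= s n.
Proof.
  unfold rho. pose proof (cond_pos_sum (fun m => Rabs (b n m)) M (fun _ => Rabs_pos _)). lra.
Qed.

Lemma rho_unif N : forall eps, 0 < eps -> exists M0, forall M, (M0 <= M)%nat ->
  sum_f_R0 (rho M) N < eps.
Proof.
  induction N; intros eps Heps.
  - destruct (psum_cv _ (H1 0%nat) eps Heps) as [M0 HM0]. exists M0. intros M HM.
    simpl. specialize (HM0 M HM). unfold rho, s. rewrite Rabs_minus_sym in HM0.
    pose proof (psum_le_series (fun m => Rabs (b 0%nat m)) M (fun _ => Rabs_pos _) (H1 0%nat)).
    rewrite Rabs_right in HM0; lra.
  - destruct (IHN (eps/2)) as [M1 HM1]. lra.
    destruct (psum_cv _ (H1 (S N)) (eps/2)) as [M2 HM2]. lra.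
    exists (max M1 M2). intros M HM. simpl.
    specialize (HM1 M ltac:(lia)). specialize (HM2 M ltac:(lia)).
    unfold rho at 2, s. rewrite Rabs_minus_sym in HM2.
    pose proof (psum_le_series (fun m => Rabs (b (S N) m)) M (fun _ => Rabs_pos _) (H1 (S N))).
    rewrite Rabs_right in HM2; lra.
Qed.

Lemma ex_series_rho M : ex_series (rho M).
Proof.
  apply (ex_series_le_R _ s); auto. intros n.
  rewrite Rabs_right. apply rho_le. apply Rle_ge, rho_nonneg.
Qed.

Lemma fubini_main : is_series (fun m => Series (fun n => b n m)) (Series (fun n => Series (b n))).
Proof.
  apply is_series_Reals. intros eps Heps.
  destruct (psum_cv s H2 (eps/2)) as [N HN]. lra.
  destruct (rho_unif N (eps/2)) as [M0 HM0]. lra.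
  exists M0. intros M HM. unfold R_dist.
  rewrite sum_series_swap.
  rewrite <- Series_minus by (apply ex_series_psum || apply ex_series_rowsum).
  eapply Rle_lt_trans. apply Series_Rabs.
  { apply (ex_series_le_R _ (rho M)). 2: apply ex_series_rho.
    intros n. rewrite Rabs_Rabsolu, Rabs_minus_sym.
    apply series_tail_abs; auto. }
  apply Rle_lt_trans with (Series (rho M)).
  { apply Series_le. 2: apply ex_series_rho. intros n; split. apply Rabs_pos.
    rewrite Rabs_minus_sym. apply series_tail_abs; auto. }
  rewrite (Series_incr_n (rho M) (S N)) by (auto using ex_series_rho; lia). simpl pred.
  assert (Series (fun k => rho M (S N + k)%nat) <= Series (fun k => s (S N + k)%nat)).
  { apply Series_le. intros; split; [apply rho_nonneg|apply rho_le].
    apply (ex_series_incr_n s (S N)); auto. }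
  assert (Series (fun k => s (S N + k)%nat) = Series s - sum_f_R0 s N).
  { rewrite (Series_incr_n s (S N)) by (auto; lia). simpl pred. ring. }
  specialize (HN N (le_n _)). specialize (HM0 M HM).
  pose proof (Rle_abs (sum_f_R0 s N - Series s)). rewrite Rabs_minus_sym in HN.
  pose proof (Rle_abs (Series s - sum_f_R0 s N)). lra.
Qed.

End Fub.

Lemma fubini (b : nat -> nat -> R) :
  (forall n, ex_series (fun m => Rabs (b n m))) ->
  ex_series (fun n => Series (fun m => Rabs (b n m))) ->
  (forall m, ex_series (fun n => Rabs (b n m))) /\
  ex_series (fun m => Series (fun n => Rabs (b n m))) /\
  Series (fun m => Series (fun n => b n m)) = Series (fun n => Series (fun m => b n m)).
Proof.
  intros H1 H2. split; [|split].
  - apply fub_col; auto.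
  - eexists. apply (fubini_main (fun n m => Rabs (b n m))).
    intros n; apply (ex_series_ext (fun m => Rabs (b n m))); auto. intros; rewrite Rabs_Rabsolu; auto.
    apply (ex_series_ext (fun n => Series (fun m => Rabs (b n m)))); auto.
    intros; apply Series_ext; intros; rewrite Rabs_Rabsolu; auto.
  - apply is_series_unique, fubini_main; auto.
Qed.


Definition DS (a : nat -> nat -> R) (x y : R) : R :=
  Series (fun n => Series (fun m => a n m * x ^ n * y ^ m)).

Definition ACp (a : nat -> nat -> R) (r : R) : Prop :=
  forall x y, Rabs x < r -> Rabs y < r ->
    (forall n, ex_series (fun m => Rabs (a n m) * Rabs x ^ n * Rabs y ^ m)) /\
    ex_series (fun n => Series (fun m => Rabs (a n m) * Rabs x ^ n * Rabs y ^ m)).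

Definition swap (a : nat -> nat -> R) n m := a m n.
Definition dx (a : nat -> nat -> R) n m := INR (S n) * a (S n) m.
Definition dy (a : nat -> nat -> R) := swap (dx (swap a)).

Lemma abs_term a n m x y : Rabs (a * x ^ n * y ^ m) = Rabs a * Rabs x ^ n * Rabs y ^ m.
Proof. rewrite !Rabs_mult, !RPow_abs. reflexivity. Qed.

Lemma ACp_swap a r : ACp a r -> ACp (swap a) r.
Proof.
  intros H x y Hx Hy. destruct (H y x Hy Hx) as [H1 H2].
  destruct (fubini (fun n m => a n m * y ^ n * x ^ m)) as [F1 [F2 _]].
  - intros n. apply (ex_series_ext (fun m => Rabs (a n m) * Rabs y ^ n * Rabs x ^ m)); auto.
    intros; rewrite abs_term; auto.
  - apply (ex_series_ext (fun n => Series (fun m => Rabs (a n m) * Rabs y ^ n * Rabs x ^ m))); auto.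
    intros; apply Series_ext; intros; rewrite abs_term; auto.
  - split.
    + intros n. apply (ex_series_ext (fun k => Rabs (a k n * y ^ k * x ^ n))); auto.
      intros k; simpl; rewrite abs_term; unfold swap; ring.
    + apply (ex_series_ext (fun m => Series (fun n => Rabs (a n m * y ^ n * x ^ m)))); auto.
      intros; apply Series_ext; intros; rewrite abs_term; unfold swap; ring.
Qed.

Lemma DS_swap a r x y : ACp a r -> Rabs x < r -> Rabs y < r -> DS a x y = DS (swap a) y x.
Proof.
  intros H Hx Hy. destruct (H x y Hx Hy) as [H1 H2].
  destruct (fubini (fun n m => a n m * x ^ n * y ^ m)) as [_ [_ F3]].
  - intros n. apply (ex_series_ext (fun m => Rabs (a n m) * Rabs x ^ n * Rabs y ^ m)); auto.
    intros; rewrite abs_term; auto.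
  - apply (ex_series_ext (fun n => Series (fun m => Rabs (a n m) * Rabs x ^ n * Rabs y ^ m))); auto.
    intros; apply Series_ext; intros; rewrite abs_term; auto.
  - unfold DS. rewrite <- F3. apply Series_ext; intros; apply Series_ext; intros; unfold swap; ring.
Qed.

Lemma pow_bern d n : 0 <= d -> 1 + INR n * d <= (1 + d) ^ n.
Proof.
  intros Hd. induction n. simpl; lra.
  rewrite S_INR. simpl. pose proof (pos_INR n). nra.
Qed.

Lemma lin_geom_bound q : 0 <= q < 1 -> forall n, INR (S n) * q ^ n <= 1 + / (1 - q).
Proof.
  intros Hq n. set (d := 1 - q).
  assert (Hd : 0 < d) by (unfold d; lra).
  assert (Hqd : q * (1 + d) <= 1) by (unfold d; nra).
  assert (H1 : (q * (1 + d)) ^ n <= 1).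
  { apply Rle_trans with (1 ^ n). apply pow_incr. split; [apply Rmult_le_pos; lra | exact Hqd]. rewrite pow1; lra. }
  rewrite Rpow_mult_distr in H1.
  pose proof (pow_bern d n (Rlt_le _ _ Hd)).
  pose proof (pow_le q n (proj1 Hq)).
  pose proof (pos_INR n). rewrite S_INR.
  assert (Hpos : 0 < 1 + INR n * d) by nra.
  apply Rmult_le_reg_r with (1 + INR n * d); auto.
  apply Rle_trans with ((INR n + 1)).
  { apply Rle_trans with ((INR n + 1) * (q ^ n * (1 + d) ^ n)).
    - rewrite <- Rmult_assoc. apply Rmult_le_compat_l. nra. auto.
    - nra. }
  assert (E : / d * (INR n * d) = INR n) by (field; lra).
  assert (0 <= INR n * d) by nra.
  assert (0 < / d) by (apply Rinv_0_lt_compat; lra).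
  fold d. nra.
Qed.

Lemma Rabs_lt_mid x r : Rabs x < r -> Rabs x < (Rabs x + r) / 2 /\ (Rabs x + r)/2 < r /\ 0 < (Rabs x + r)/2.
Proof. intros; pose proof (Rabs_pos x); lra. Qed.

Lemma ACp_dx a r : ACp a r -> ACp (dx a) r.
Proof.
  intros H x y Hx Hy.
  destruct (Rabs_lt_mid x r Hx) as [Hr1 [Hr2 Hr3]]. set (rho := (Rabs x + r)/2) in *.
  assert (Hrho : Rabs rho < r) by (rewrite Rabs_right; lra).
  destruct (H rho y Hrho Hy) as [H1 H2].
  set (q := Rabs x / rho).
  assert (Hq : 0 <= q < 1).
  { unfold q; split. apply Rmult_le_pos; [apply Rabs_pos| left; apply Rinv_0_lt_compat; lra].
    apply Rmult_lt_reg_r with rho; auto. unfold Rdiv. rewrite Rmult_assoc, Rinv_l; lra. }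
  set (K := (1 + / (1 - q)) / rho).
  assert (HK : 0 <= K).
  { unfold K. apply Rmult_le_pos. assert (0 < /(1-q)) by (apply Rinv_0_lt_compat; lra). lra.
    left; apply Rinv_0_lt_compat; lra. }
  assert (Hb : forall n m, Rabs (dx a n m) * Rabs x ^ n * Rabs y ^ m <=
     K * (Rabs (a (S n) m) * Rabs rho ^ (S n) * Rabs y ^ m)).
  { intros n m. unfold dx. rewrite Rabs_mult, (Rabs_right (INR (S n))) by (apply Rle_ge, pos_INR).
    rewrite (Rabs_right rho) by lra.
    assert (E : Rabs x ^ n = q ^ n * rho ^ n).
    { unfold q. rewrite <- Rpow_mult_distr. f_equal. field. lra. }
    rewrite E. pose proof (lin_geom_bound q Hq n).
    pose proof (pow_le (Rabs y) m (Rabs_pos y)). pose proof (Rabs_pos (a (S n) m)).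
    pose proof (pow_le rho n (Rlt_le _ _ Hr3)). pose proof (pow_le q n (proj1 Hq)).
    unfold K. change (rho ^ S n) with (rho * rho ^ n).
    replace ((1 + / (1 - q)) / rho * (Rabs (a (S n) m) * (rho * rho ^ n) * Rabs y ^ m))
      with ((1 + / (1 - q)) * (Rabs (a (S n) m) * rho ^ n * Rabs y ^ m)) by (field; lra).
    replace (INR (S n) * Rabs (a (S n) m) * (q ^ n * rho ^ n) * Rabs y ^ m)
      with ((INR (S n) * q ^ n) * (Rabs (a (S n) m) * rho ^ n * Rabs y ^ m)) by ring.
    apply (Rmult_le_compat_r (Rabs (a (S n) m) * rho ^ n * Rabs y ^ m)); auto.
    apply Rmult_le_pos; auto. apply Rmult_le_pos; auto. }
  assert (Hin : forall n, ex_series (fun m => Rabs (dx a n m) * Rabs x ^ n * Rabs y ^ m)).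
  { intros n. apply (ex_series_le_R _ (fun m => K * (Rabs (a (S n) m) * Rabs rho ^ (S n) * Rabs y ^ m)));
    [| apply (ex_series_scal_l K (fun m => Rabs (a (S n) m) * Rabs rho ^ (S n) * Rabs y ^ m)), H1].
    intros m. rewrite Rabs_right. apply Hb. apply Rle_ge. rewrite <- abs_term. apply Rabs_pos. }
  split; auto.
  apply (ex_series_le_R _ (fun n => K * Series (fun m => Rabs (a (S n) m) * Rabs rho ^ (S n) * Rabs y ^ m))).
  - intros n. rewrite Rabs_right.
    rewrite <- Series_scal_l. apply Series_le.
    intros m; split. rewrite <- abs_term; apply Rabs_pos. apply Hb.
    apply (ex_series_scal_l K (fun m => Rabs (a (S n) m) * Rabs rho ^ (S n) * Rabs y ^ m)), H1.
    apply Rle_ge, series_nonneg; auto. intros; rewrite <- abs_term; apply Rabs_pos.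
  - apply (ex_series_scal_l K (fun n => Series (fun m => Rabs (a (S n) m) * Rabs rho ^ (S n) * Rabs y ^ m))).
    apply (ex_series_incr_1 (fun n => Series (fun m => Rabs (a n m) * Rabs rho ^ n * Rabs y ^ m))); auto.
Qed.

Lemma DS_inner a n t y : Series (fun m => a n m * t ^ n * y ^ m) = Series (fun m => a n m * y ^ m) * t ^ n.
Proof.
  rewrite <- Series_scal_r. apply Series_ext; intros; ring.
Qed.

Lemma DS_pseries a t y : DS a t y = PSeries (fun n => Series (fun m => a n m * y ^ m)) t.
Proof.
  unfold DS, PSeries. apply Series_ext; intros n. apply DS_inner.
Qed.

Lemma CV_radius_ge (c : nat -> R) rho M : (forall n, Rabs (c n * rho ^ n) <= M) ->
  Rbar_le rho (CV_radius c).
Proof.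
  intros H. destruct (CV_radius_bounded c) as [Hub _]. apply Hub. exists M; auto.
Qed.

Lemma DS_is_derive_x a r x y : ACp a r -> Rabs x < r -> Rabs y < r ->
  is_derive (fun t => DS a t y) x (DS (dx a) x y).
Proof.
  intros H Hx Hy.
  set (c n := Series (fun m => a n m * y ^ m)).
  destruct (Rabs_lt_mid x r Hx) as [Hr1 [Hr2 Hr3]]. set (rho := (Rabs x + r)/2) in *.
  assert (Hrho : Rabs rho < r) by (rewrite Rabs_right; lra).
  destruct (H rho y Hrho Hy) as [H1 H2].
  assert (Hcv : Rbar_lt (Rabs x) (CV_radius c)).
  { eapply Rbar_lt_le_trans with (y := Finite rho). simpl; auto.
    apply CV_radius_ge with (M := Series (fun n => Series (fun m => Rabs (a n m) * Rabs rho ^ n * Rabs y ^ m))).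
    intros n. unfold c. rewrite <- DS_inner.
    eapply Rle_trans. apply Series_Rabs.
    apply (ex_series_ext (fun m => Rabs (a n m) * Rabs rho ^ n * Rabs y ^ m)); auto.
    intros; rewrite abs_term; auto.
    rewrite (Series_ext _ (fun m => Rabs (a n m) * Rabs rho ^ n * Rabs y ^ m)) by (intros; apply abs_term).
    apply (term_le_series (fun n => Series (fun m => Rabs (a n m) * Rabs rho ^ n * Rabs y ^ m))); auto.
    intros; apply series_nonneg; auto. intros; rewrite <- abs_term; apply Rabs_pos. }
  pose proof (is_derive_PSeries c x Hcv) as HD.
  replace (DS (dx a) x y) with (PSeries (PS_derive c) x).
  - eapply is_derive_ext. 2: exact HD. intros t; simpl. unfold c. rewrite DS_pseries. reflexivity.
  - unfold DS, PSeries, PS_derive, c, dx. apply Series_ext; intros n.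
    rewrite <- Series_scal_l, <- Series_scal_r. apply Series_ext; intros; ring.
Qed.

Lemma locally_abs y r : Rabs y < r -> locally y (fun t => Rabs t < r).
Proof.
  intros H. assert (Hp : 0 < r - Rabs y) by lra.
  exists (mkposreal _ Hp). intros t Ht. unfold ball in Ht; simpl in Ht. unfold AbsRing_ball, abs, minus, plus, opp in Ht; simpl in Ht.
  pose proof (Rabs_triang_inv t y). unfold Rminus in *. lra.
Qed.

Lemma ACp_dy a r : ACp a r -> ACp (dy a) r.
Proof. intros H. apply ACp_swap, ACp_dx, ACp_swap, H. Qed.

Lemma DS_is_derive_y a r x y : ACp a r -> Rabs x < r -> Rabs y < r ->
  is_derive (fun t => DS a x t) y (DS (dy a) x y).
Proof.
  intros H Hx Hy.
  pose proof (DS_is_derive_x (swap a) r y x (ACp_swap a r H) Hy Hx) as HD.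
  rewrite (DS_swap (dx (swap a)) r y x (ACp_dx _ _ (ACp_swap a r H)) Hy Hx) in HD.
  eapply is_derive_ext_loc. 2: exact HD.
  generalize (locally_abs y r Hy). apply filter_imp. intros t Ht.
  symmetry. apply (DS_swap a r); auto.
Qed.

Lemma DS_bound b r rho t s : ACp b r -> 0 <= rho < r -> Rabs t <= rho -> Rabs s <= rho ->
  Rabs (DS b t s) <= Series (fun n => Series (fun m => Rabs (b n m) * Rabs rho ^ n * Rabs rho ^ m)).
Proof.
  intros H Hr Ht Hs.
  assert (Hrr : Rabs rho < r) by (rewrite Rabs_right; lra).
  destruct (H t s ltac:(lra) ltac:(lra)) as [A1 A2].
  destruct (H rho rho Hrr Hrr) as [B1 B2].
  assert (Hmono : forall n m, Rabs (b n m) * Rabs t ^ n * Rabs s ^ m <= Rabs (b n m) * Rabs rho ^ n * Rabs rho ^ m).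
  { intros n m. rewrite (Rabs_right rho) by lra.
    pose proof (Rabs_pos (b n m)).
    assert (Rabs t ^ n <= rho ^ n) by (apply pow_incr; split; [apply Rabs_pos|auto]).
    assert (Rabs s ^ m <= rho ^ m) by (apply pow_incr; split; [apply Rabs_pos|auto]).
    pose proof (pow_le (Rabs t) n (Rabs_pos _)). pose proof (pow_le (Rabs s) m (Rabs_pos _)).
    apply Rmult_le_compat; try apply Rmult_le_pos; auto. apply Rmult_le_compat_l; auto. }
  assert (Hin : forall n, Rabs (Series (fun m => b n m * t ^ n * s ^ m)) <=
      Series (fun m => Rabs (b n m) * Rabs rho ^ n * Rabs rho ^ m)).
  { intros n. eapply Rle_trans. apply Series_Rabs.
    apply (ex_series_ext (fun m => Rabs (b n m) * Rabs t ^ n * Rabs s ^ m)); auto.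
    intros; rewrite abs_term; auto.
    apply Series_le; auto. intros m; split. apply Rabs_pos. rewrite abs_term; apply Hmono. }
  unfold DS. eapply Rle_trans. apply Series_Rabs.
  apply (ex_series_le_R _ (fun n => Series (fun m => Rabs (b n m) * Rabs rho ^ n * Rabs rho ^ m))); auto.
  intros n; rewrite Rabs_Rabsolu; auto.
  apply Series_le; auto. intros n; split; [apply Rabs_pos| auto].
Qed.

Lemma between_abs x u t rho : Rabs x < rho -> Rabs u < rho -> Rmin x u <= t <= Rmax x u -> Rabs t < rho.
Proof.
  intros Hx Hu Ht. apply Rabs_def2 in Hx. apply Rabs_def2 in Hu. apply Rabs_def1;
  unfold Rmin, Rmax in Ht; destruct (Rle_dec x u); lra.
Qed.

Lemma cont_of_derive (f : R -> R) x l : is_derive f x l -> continuity_pt f x.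
Proof.
  intros H. apply continuity_pt_filterlim. apply (@ex_derive_continuous R_AbsRing R_NormedModule). exists l; auto.
Qed.

Lemma DS_cont a r x y : ACp a r -> Rabs x < r -> Rabs y < r -> continuity_2d_pt (DS a) x y.
Proof.
  intros H Hx Hy eps.
  set (rho := (Rmax (Rabs x) (Rabs y) + r) / 2).
  assert (Hmx : Rabs x <= Rmax (Rabs x) (Rabs y)) by apply Rmax_l.
  assert (Hmy : Rabs y <= Rmax (Rabs x) (Rabs y)) by apply Rmax_r.
  assert (Hmr : Rmax (Rabs x) (Rabs y) < r) by (apply Rmax_lub_lt; auto).
  assert (Hxr : Rabs x < rho) by (unfold rho; lra).
  assert (Hyr : Rabs y < rho) by (unfold rho; lra).
  assert (Hrr : 0 <= rho < r) by (unfold rho; pose proof (Rabs_pos x); lra).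
  set (M := Series (fun n => Series (fun m => Rabs (dx a n m) * Rabs rho ^ n * Rabs rho ^ m))).
  assert (HM : 0 <= M).
  { eapply Rle_trans. apply Rabs_pos. apply (DS_bound (dx a) r rho 0 0); auto using ACp_dx.
    rewrite Rabs_R0; lra. rewrite Rabs_R0; lra. }
  pose proof (DS_is_derive_y a r x y H Hx Hy) as Hdy.
  assert (Hc := @ex_derive_continuous R_AbsRing R_NormedModule (fun t => DS a x t) y (ex_intro _ _ Hdy)).
  assert (He2 : 0 < eps / 2) by (pose proof (cond_pos eps); lra).
  destruct (proj1 (filterlim_locally _ _) Hc (mkposreal _ He2)) as [d1 Hd1].
  assert (Hd : 0 < Rmin (Rmin d1 (eps / (2 * (M + 1)))) (Rmin (rho - Rabs x) (rho - Rabs y))).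
  { repeat apply Rmin_pos; try lra. apply cond_pos. apply Rdiv_lt_0_compat. pose proof (cond_pos eps); lra. lra. }
  exists (mkposreal _ Hd). intros u v Hu Hv. simpl in Hu, Hv.
  assert (Hu1 : Rabs (u - x) < d1) by (eapply Rlt_le_trans; [exact Hu|]; eapply Rle_trans; apply Rmin_l).
  assert (Hu2 : Rabs (u - x) < eps / (2 * (M + 1))) by (eapply Rlt_le_trans; [exact Hu|]; eapply Rle_trans; [apply Rmin_l|apply Rmin_r]).
  assert (Hu3 : Rabs (u - x) < rho - Rabs x) by (eapply Rlt_le_trans; [exact Hu|]; eapply Rle_trans; [apply Rmin_r|apply Rmin_l]).
  assert (Hv1 : Rabs (v - y) < d1) by (eapply Rlt_le_trans; [exact Hv|]; eapply Rle_trans; apply Rmin_l).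
  assert (Hv3 : Rabs (v - y) < rho - Rabs y) by (eapply Rlt_le_trans; [exact Hv|]; eapply Rle_trans; [apply Rmin_r|apply Rmin_r]).
  assert (Hur : Rabs u < rho) by (pose proof (Rabs_triang_inv u x); lra).
  assert (Hvr : Rabs v < rho) by (pose proof (Rabs_triang_inv v y); lra).
  assert (Hcont : Rabs (DS a x v - DS a x y) < eps / 2).
  { specialize (Hd1 v). unfold ball in Hd1; simpl in Hd1. unfold AbsRing_ball, abs, minus, plus, opp in Hd1; simpl in Hd1.
    apply Hd1. exact Hv1. }
  destruct (MVT_gen (fun t => DS a t v) x u (fun t => DS (dx a) t v)) as [c [Hc1 Hc2]].
  - intros t Ht. assert (Rabs t < rho) by (apply (between_abs x u t rho); auto; lra).
    apply (DS_is_derive_x a r); auto; lra.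
  - intros t Ht. assert (Rabs t < rho) by (apply (between_abs x u t rho); auto; lra).
    eapply cont_of_derive. apply (DS_is_derive_x a r); auto; lra.
  - assert (Hcr : Rabs c < rho) by (apply (between_abs x u c rho); auto).
    pose proof (DS_bound (dx a) r rho c v (ACp_dx a r H) Hrr ltac:(lra) ltac:(lra)) as Hb.
    fold M in Hb.
    assert (Rabs (DS a u v - DS a x v) <= M * Rabs (u - x)).
    { rewrite Hc2, Rabs_mult. apply Rmult_le_compat_r; auto. apply Rabs_pos. }
    assert (M * Rabs (u - x) <= M * (eps / (2 * (M + 1)))) by (apply Rmult_le_compat_l; lra).
    assert (M * (eps / (2 * (M + 1))) < eps / 2).
    { unfold Rdiv. rewrite Rinv_mult. pose proof (cond_pos eps).
      assert (0 < / (M + 1)) by (apply Rinv_0_lt_compat; lra).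
      assert (M * / (M + 1) < 1). { apply Rmult_lt_reg_r with (M + 1). lra. rewrite Rmult_assoc, Rinv_l; lra. }
      assert (0 < eps * / 2) by lra. 
      replace (M * (eps * (/ 2 * / (M + 1)))) with ((M * / (M + 1)) * (eps * / 2)) by ring. nra. }
    replace (DS a u v - DS a x y) with ((DS a u v - DS a x v) + (DS a x v - DS a x y)) by ring.
    eapply Rle_lt_trans. apply Rabs_triang. lra.
Qed.

Lemma locally_2d_abs x y r : Rabs x < r -> Rabs y < r -> locally_2d (fun u v => Rabs u < r /\ Rabs v < r) x y.
Proof.
  intros Hx Hy. assert (Hd : 0 < Rmin (r - Rabs x) (r - Rabs y)) by (apply Rmin_pos; lra).
  exists (mkposreal _ Hd). intros u v Hu Hv; simpl in *.
  pose proof (Rmin_l (r - Rabs x) (r - Rabs y)). pose proof (Rmin_r (r - Rabs x) (r - Rabs y)).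
  pose proof (Rabs_triang_inv u x). pose proof (Rabs_triang_inv v y). split; lra.
Qed.

Lemma DS_ex_diff r n : forall a x y, ACp a r -> Rabs x < r -> Rabs y < r -> ex_diff_n (DS a) n x y.
Proof.
  induction n; intros a x y H Hx Hy.
  - split; [apply (DS_cont a r); auto | exact I].
  - split; [apply (DS_cont a r); auto |].
    split; [eexists; apply (DS_is_derive_x a r); auto|].
    split; [eexists; apply (DS_is_derive_y a r); auto|].
    split.
    + apply ex_diff_n_ext_loc with (f := DS (dx a)).
      generalize (locally_2d_abs x y r Hx Hy). apply locally_2d_impl. apply locally_2d_forall.
      intros u v [Hu Hv]. symmetry. apply is_derive_unique. apply (DS_is_derive_x a r); auto.
      apply IHn; auto. apply ACp_dx; auto.
    + apply ex_diff_n_ext_loc with (f := DS (dy a)).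
      generalize (locally_2d_abs x y r Hx Hy). apply locally_2d_impl. apply locally_2d_forall.
      intros u v [Hu Hv]. symmetry. apply is_derive_unique. apply (DS_is_derive_y a r); auto.
      apply IHn; auto. apply ACp_dy; auto.
Qed.

Lemma DS_diff a r x y : ACp a r -> Rabs x < r -> Rabs y < r ->
  differentiable_pt_lim (DS a) x y (DS (dx a) x y) (DS (dy a) x y).
Proof.
  intros H Hx Hy.
  destruct (Taylor_Lagrange_2d (DS a) 1 x y) as [D HD].
  { generalize (locally_2d_abs x y r Hx Hy). apply locally_2d_impl. apply locally_2d_forall.
    intros u v [Hu Hv]. apply (DS_ex_diff r); auto. }
  unfold DL_pol, differential in HD. simpl in HD.
  assert (C00 : Binomial.C 0 0 = 1) by (unfold Binomial.C; simpl; field).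
  assert (C10 : Binomial.C 1 0 = 1) by (unfold Binomial.C; simpl; field).
  assert (C11 : Binomial.C 1 1 = 1) by (unfold Binomial.C; simpl; field).
  assert (P00 : partial_derive 0 0 (DS a) x y = DS a x y) by reflexivity.
  assert (P01 : partial_derive 0 1 (DS a) x y = DS (dy a) x y).
  { change (Derive (fun z => DS a x z) y = DS (dy a) x y). apply is_derive_unique, (DS_is_derive_y a r); auto. }
  assert (P10 : partial_derive 1 0 (DS a) x y = DS (dx a) x y).
  { change (Derive (fun z => DS a z y) x = DS (dx a) x y). apply is_derive_unique, (DS_is_derive_x a r); auto. }
  rewrite C00, C10, C11, P00, P01, P10 in HD.
  intros eps. destruct HD as [d0 Hd0].
  assert (Hd : 0 < Rmin d0 (eps / (Rabs D + 1))).
  { apply Rmin_pos. apply cond_pos. apply Rdiv_lt_0_compat. apply cond_pos. pose proof (Rabs_pos D); lra. }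
  exists (mkposreal _ Hd). intros u v Hu Hv; simpl in Hu, Hv.
  pose proof (Rmin_l d0 (eps / (Rabs D + 1))). pose proof (Rmin_r d0 (eps / (Rabs D + 1))).
  specialize (Hd0 u v ltac:(lra) ltac:(lra)).
  set (m := Rmax (Rabs (u - x)) (Rabs (v - y))) in *.
  assert (Hm0 : 0 <= m) by (unfold m; eapply Rle_trans; [apply Rabs_pos| apply Rmax_l]).
  assert (Hm1 : m < eps / (Rabs D + 1)) by (unfold m; apply Rmax_lub_lt; lra).
  assert (E : 1 * DS a x y * 1 * 1 / 1 + (1 * DS (dy a) x y * 1 * ((v - y) * 1) + 1 * DS (dx a) x y * ((u - x) * 1) * 1) / 1
     = DS a x y + (DS (dx a) x y * (u - x) + DS (dy a) x y * (v - y))) by field.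
  rewrite E in Hd0.
  replace (DS a u v - DS a x y - (DS (dx a) x y * (u - x) + DS (dy a) x y * (v - y)))
    with (DS a u v - (DS a x y + (DS (dx a) x y * (u - x) + DS (dy a) x y * (v - y)))) by ring.
  eapply Rle_trans. exact Hd0.
  assert (HDm : D * (m * (m * 1)) <= Rabs D * m * m).
  { rewrite Rmult_1_r, <- Rmult_assoc. apply Rmult_le_compat_r; auto. apply Rmult_le_compat_r; auto. apply Rle_abs. }
  assert (Rabs D * m <= eps).
  { pose proof (Rabs_pos D). apply Rle_trans with ((Rabs D + 1) * m). nra.
    apply Rmult_lt_compat_l with (r := Rabs D + 1) in Hm1; [|lra].
    unfold Rdiv in Hm1. rewrite <- Rmult_assoc, (Rmult_comm (Rabs D + 1) eps), Rmult_assoc, Rinv_r in Hm1; lra. }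
  eapply Rle_trans. exact HDm. apply Rmult_le_compat_r; auto.
Qed.


Definition clampR (lo hi t : R) := Rmax lo (Rmin hi t).

Lemma clamp_in lo hi t : lo <= hi -> lo <= clampR lo hi t <= hi.
Proof. intros; unfold clampR, Rmax, Rmin; repeat destruct Rle_dec; lra. Qed.

Lemma clamp_id lo hi t : lo <= t <= hi -> clampR lo hi t = t.
Proof. intros; unfold clampR, Rmax, Rmin; repeat destruct Rle_dec; lra. Qed.

Lemma clamp_lip lo hi t t' : lo <= hi -> Rabs (clampR lo hi t - clampR lo hi t') <= Rabs (t - t').
Proof.
  intros; unfold clampR, Rmax, Rmin; repeat destruct Rle_dec; unfold Rabs; repeat destruct Rcase_abs; lra.
Qed.

Lemma clamp_sym_dist c1 c2 x : 0 <= c2 -> Rabs x <= c1 -> Rabs (clampR (- c2) c2 x - x) <= Rabs (c1 - c2).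
Proof.
  intros H1 H2. revert H2. unfold clampR, Rmax, Rmin; repeat destruct Rle_dec; unfold Rabs; repeat destruct Rcase_abs; lra.
Qed.

Lemma cont_2d_1d (W : R -> R -> R) x y : continuity_2d_pt W x y -> continuity_pt (fun t => W t y) x.
Proof.
  intros H. unfold continuity_pt, continue_in, limit1_in, limit_in; simpl. unfold R_dist.
  intros eps Heps. destruct (H (mkposreal _ Heps)) as [d Hd].
  exists d. split. apply cond_pos. intros t [_ Ht]. apply Hd. auto. rewrite Rminus_diag_eq, Rabs_R0 by auto. apply cond_pos.
Qed.

Lemma max_triangle (W : R -> R -> R) a h :
  0 < h -> h <= a ->
  (forall x y, -a <= x <= a -> 0 <= y <= h -> continuity_2d_pt W x y) ->
  exists x0 y0, 0 <= y0 <= h /\ Rabs x0 <= a - y0 /\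
    forall x y, 0 <= y <= h -> Rabs x <= a - y -> W x y <= W x0 y0.
Proof.
  intros Hh Ha Hc.
  assert (Hex : forall y, exists xm, 0 <= y <= h -> (- (a - y) <= xm <= a - y /\
      forall x, - (a - y) <= x <= a - y -> W x y <= W xm y)).
  { intros y. destruct (Rle_dec 0 y) as [H0|H0]; [destruct (Rle_dec y h) as [H1|H1]|].
    - destruct (continuity_ab_maj (fun t => W t y) (- (a - y)) (a - y)) as [xm [Hm1 Hm2]].
      lra. intros c Hc'. apply cont_2d_1d, Hc; lra.
      exists xm. intros _. split; auto.
    - exists 0. intros; lra.
    - exists 0. intros; lra. }
  set (xm := fun y => epsilon (inhabits 0) (fun xm => 0 <= y <= h -> (- (a - y) <= xm <= a - y /\
      forall x, - (a - y) <= x <= a - y -> W x y <= W xm y))).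
  assert (Hxm : forall y, 0 <= y <= h -> - (a - y) <= xm y <= a - y /\
      forall x, - (a - y) <= x <= a - y -> W x y <= W (xm y) y).
  { intros y Hy. unfold xm. apply (epsilon_spec (inhabits 0) _ (Hex y)); auto. }
  set (cl := fun y => clampR 0 h y).
  set (G := fun y => W (xm (cl y)) (cl y)).
  assert (Hcl : forall y, 0 <= cl y <= h) by (intros; apply clamp_in; lra).
  assert (HGc : forall y, 0 <= y <= h -> continuity_pt G y).
  { intros y Hy. unfold continuity_pt, continue_in, limit1_in, limit_in; simpl. unfold R_dist.
    intros eps Heps.
    destruct (uniform_continuity_2d W (-a) a 0 h) with (eps := mkposreal _ (ltac:(lra) : 0 < eps / 2)) as [d0 Hd0].
    intros; apply Hc; lra.
    exists d0. split. apply cond_pos. intros y' [_ Hy'].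
    assert (Hcc : Rabs (cl y' - cl y) < d0).
    { eapply Rle_lt_trans. apply clamp_lip; lra. auto. }
    unfold G.
    assert (K : forall y1 y2, 0 <= y1 <= h -> 0 <= y2 <= h -> Rabs (y1 - y2) < d0 -> W (xm y1) y1 < W (xm y2) y2 + eps / 2).
    { intros y1 y2 H1 H2 Hyy.
      destruct (Hxm y1 H1) as [A1 A2]. destruct (Hxm y2 H2) as [B1 B2].
      set (x2 := clampR (- (a - y2)) (a - y2) (xm y1)).
      assert (Hx2 : - (a - y2) <= x2 <= a - y2) by (apply clamp_in; lra).
      assert (Hd2 : Rabs (x2 - xm y1) <= Rabs ((a - y1) - (a - y2))).
      { apply clamp_sym_dist. lra. apply Rabs_le; lra. }
      replace ((a - y1) - (a - y2)) with (- (y1 - y2)) in Hd2 by ring. rewrite Rabs_Ropp in Hd2.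
      assert (Hyy' : Rabs (y2 - y1) < d0) by (rewrite Rabs_minus_sym; auto).
      specialize (Hd0 (xm y1) y1 x2 y2 ltac:(lra) ltac:(lra) ltac:(lra) ltac:(lra) ltac:(lra) ltac:(lra)).
      simpl in Hd0. specialize (B2 x2 Hx2). apply Rabs_def2 in Hd0. lra. }
    pose proof (K (cl y') (cl y) (Hcl y') (Hcl y) Hcc).
    rewrite Rabs_minus_sym in Hcc.
    pose proof (K (cl y) (cl y') (Hcl y) (Hcl y') Hcc).
    apply Rabs_def1; lra. }
  destruct (continuity_ab_maj G 0 h) as [ym [Hym1 Hym2]]. lra. auto.
  exists (xm ym), ym. 
  assert (Eym : cl ym = ym) by (apply clamp_id; auto).
  destruct (Hxm ym Hym2) as [C1 C2].
  split; auto. split. apply Rabs_le; lra.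
  intros x y Hy Hx. specialize (Hym1 y Hy). unfold G in Hym1. rewrite Eym in Hym1.
  assert (Ey : cl y = y) by (apply clamp_id; auto). rewrite Ey in Hym1.
  destruct (Hxm y Hy) as [D1 D2]. apply Rabs_le_between in Hx.
  specialize (D2 x ltac:(lra)). lra.
Qed.

Lemma max_principle (W : R -> R -> R) a h :
  0 < h -> h <= a ->
  (forall x y, -a <= x <= a -> 0 <= y <= h -> continuity_2d_pt W x y) ->
  (forall x, Rabs x <= a -> W x 0 <= 0) ->
  (forall x y, 0 < y <= h -> Rabs x <= a - y -> 0 < W x y ->
     exists v1 v2 D, Rabs v1 <= v2 /\ 0 < v2 /\ 0 < D /\
       derivable_pt_lim (fun t => W (x - t * v1) (y - t * v2)) 0 D) ->
  forall x y, 0 <= y <= h -> Rabs x <= a - y -> W x y <= 0.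
Proof.
  intros Hh Ha Hc H0 Hd x y Hy Hx.
  destruct (max_triangle W a h Hh Ha Hc) as [x0 [y0 [Hy0 [Hx0 Hmax]]]].
  eapply Rle_trans. apply Hmax; auto.
  destruct (Rle_dec (W x0 y0) 0) as [Hle|Hgt]; auto. exfalso.
  apply Rnot_le_lt in Hgt.
  destruct (Req_dec y0 0) as [Hy00|Hy00].
  { subst y0. specialize (H0 x0 ltac:(lra)). lra. }
  destruct (Hd x0 y0 ltac:(lra) Hx0 Hgt) as [v1 [v2 [D [Hv [Hv2 [HD Hder]]]]]].
  destruct (Hder (D/2) ltac:(lra)) as [[d Hdpos] Hdd]. simpl in Hdd.
  set (t := Rmin (d/2) (y0 / v2)).
  assert (Ht0 : 0 < t) by (apply Rmin_pos; [lra| apply Rdiv_lt_0_compat; lra]).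
  assert (Ht1 : t <= d/2) by apply Rmin_l.
  assert (Ht2 : t <= y0 / v2) by apply Rmin_r.
  assert (Ht3 : t * v2 <= y0).
  { apply Rmult_le_compat_r with (r := v2) in Ht2; [|lra]. unfold Rdiv in Ht2.
    rewrite Rmult_assoc, Rinv_l in Ht2; lra. }
  specialize (Hdd t ltac:(lra) ltac:(rewrite Rabs_right; lra)).
  rewrite Rplus_0_l in Hdd. rewrite !Rmult_0_l, !Rminus_0_r in Hdd.
  apply Rabs_def2 in Hdd. destruct Hdd as [_ Hdd].
  assert (Hinc : W (x0 - t * v1) (y0 - t * v2) - W x0 y0 > t * (D/2)).
  { assert (E : (W (x0 - t * v1) (y0 - t * v2) - W x0 y0) / t - D + D = (W (x0 - t * v1) (y0 - t * v2) - W x0 y0) / t) by ring.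
    assert (Hq : (W (x0 - t * v1) (y0 - t * v2) - W x0 y0) / t > D / 2) by lra.
    apply Rmult_gt_compat_r with (r := t) in Hq; [|lra]. unfold Rdiv in Hq.
    rewrite Rmult_assoc, Rinv_l in Hq; lra. }
  assert (Hin : W (x0 - t * v1) (y0 - t * v2) <= W x0 y0).
  { apply Hmax. nra. 
    eapply Rle_trans. apply Rabs_triang. rewrite Rabs_Ropp, Rabs_mult, (Rabs_right t) by lra.
    assert (t * Rabs v1 <= t * v2) by (apply Rmult_le_compat_l; lra). lra. }
  nra.
Qed.


Definition Pf a := DS (dx a).
Definition Qf a := DS (dy a).
Definition Bf a x y := 1 - Pf a x y ^ 2 - Qf a x y ^ 2.

Lemma DS_ext a b x y : (forall n m, a n m = b n m) -> DS a x y = DS b x y.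
Proof. intros H. unfold DS. apply Series_ext; intros; apply Series_ext; intros; rewrite H; auto. Qed.

Lemma dxdy a x y : DS (dx (dy a)) x y = DS (dy (dx a)) x y.
Proof. apply DS_ext; intros; unfold dx, dy, swap, dx; ring. Qed.

Lemma path_deriv (g : R -> R -> R) x y gx gy u1 u2 : differentiable_pt_lim g x y gx gy ->
  is_derive (fun t => g (x - t * u1) (y - t * u2)) 0 (- (gx * u1 + gy * u2)).
Proof.
  intros H. apply is_derive_Reals.
  replace (- (gx * u1 + gy * u2)) with (gx * (- u1) + gy * (- u2)) by ring.
  apply (derivable_pt_lim_comp_2d g (fun t => x - t * u1) (fun t => y - t * u2)).
  - replace (x - 0 * u1) with x by ring. replace (y - 0 * u2) with y by ring. auto.
  - apply is_derive_Reals. auto_derive; auto. ring.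
  - apply is_derive_Reals. auto_derive; auto. ring.
Qed.

Lemma abs_s s : (s = 1 \/ s = -1) -> Rabs s = 1.
Proof. intros [H|H]; subst; unfold Rabs; destruct Rcase_abs; lra. Qed.

Lemma cont_2d_negy (g : R -> R -> R) s x y : (s = 1 \/ s = -1) -> continuity_2d_pt g x (s * y) ->
  continuity_2d_pt (fun u v => g u (s * v)) x y.
Proof.
  intros Hs H eps. destruct (H eps) as [d Hd]. exists d. intros u v Hu Hv. apply Hd; auto.
  replace (s * v - s * y) with (s * (v - y)) by ring. rewrite Rabs_mult.
  rewrite abs_s by auto; lra.
Qed.

Lemma W_deriv (g h : R -> R) K y q dg dh : is_derive g 0 dg -> is_derive h 0 dh ->
  is_derive (fun t => exp (- K * (y - t * q)) * (1 - g t ^ 2 - h t ^ 2) ^ 2) 0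
   (exp (- K * y) * (K * q) * (1 - g 0 ^ 2 - h 0 ^ 2) ^ 2 +
    exp (- K * y) * (2 * (1 - g 0 ^ 2 - h 0 ^ 2) * (-2 * (g 0 * dg + h 0 * dh)))).
Proof.
  intros Hg Hh. auto_derive.
  split; [eexists; exact Hg| split; [eexists; exact Hh| auto]].
  change (Derive (fun x => g x) 0) with (Derive g 0).
  change (Derive (fun x => h x) 0) with (Derive h 0).
  rewrite (is_derive_unique _ _ _ Hg), (is_derive_unique _ _ _ Hh).
  replace (y + - (0 * q)) with y by ring. ring.
Qed.

Lemma is_derive_replace (f : R -> R) x l l' : is_derive f x l -> l = l' -> is_derive f x l'.
Proof. intros H <-; auto. Qed.

Section Back.
Variables (a : nat -> nat -> R) (r R1 C a0 : R).
Hypothesis Hac : ACp a r.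
Hypothesis HR1 : 0 < R1 <= r.
Hypothesis HA : forall x y, Rabs x < R1 -> Rabs y < R1 ->
  (1 - Pf a x y ^ 2) * DS (dy (dy a)) x y + 2 * Pf a x y * Qf a x y * DS (dy (dx a)) x y
  + (1 - Qf a x y ^ 2) * DS (dx (dx a)) x y = 0.
Hypothesis Hbnd : forall x y, Rabs x < R1 -> Rabs y < R1 ->
  Rabs (Pf a x y) < 1/2 /\ 1/2 < Qf a x y /\ Rabs (DS (dx (dx a)) x y + DS (dy (dy a)) x y) <= C.
Hypothesis Ha0 : 0 < a0 < R1.
Hypothesis HB0 : forall x, Rabs x <= a0 -> Bf a x 0 = 0.

Let K := 8 * C + 2.

Lemma Bf_cont x y : Rabs x < r -> Rabs y < r -> continuity_2d_pt (Bf a) x y.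
Proof.
  intros Hx Hy. unfold Bf.
  apply continuity_2d_pt_minus. apply continuity_2d_pt_minus. apply continuity_2d_pt_const.
  simpl. apply continuity_2d_pt_mult. apply (DS_cont _ r); auto using ACp_dx.
  apply continuity_2d_pt_mult. apply (DS_cont _ r); auto using ACp_dx. apply continuity_2d_pt_const.
  simpl. apply continuity_2d_pt_mult. apply (DS_cont _ r); auto using ACp_dy.
  apply continuity_2d_pt_mult. apply (DS_cont _ r); auto using ACp_dy. apply continuity_2d_pt_const.
Qed.

Lemma side s : (s = 1 \/ s = -1) -> forall x y, 0 <= y <= a0 -> Rabs x <= a0 - y -> Bf a x (s * y) = 0.
Proof.
  intros Hs.
  assert (Hs2 : s * s = 1) by (destruct Hs; subst; ring).
  assert (Hsa : forall y, Rabs (s * y) = Rabs y) by (intros; rewrite Rabs_mult, abs_s by auto; ring).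
  set (W := fun x y => exp (- K * y) * Bf a x (s * y) ^ 2).
  assert (HW : forall x y, 0 <= y <= a0 -> Rabs x <= a0 - y -> W x y <= 0).
  { apply max_principle; try lra.
    - intros x y Hx Hy. unfold W. apply continuity_2d_pt_mult.
      + apply continuity_1d_2d_pt_comp. apply derivable_continuous_pt, derivable_pt_exp.
        apply continuity_2d_pt_mult. apply continuity_2d_pt_const. apply continuity_2d_pt_id2.
      + simpl. apply continuity_2d_pt_mult. apply (cont_2d_negy (Bf a) s); auto. apply Bf_cont; rewrite ?Hsa; (apply Rle_lt_trans with a0; [apply Rabs_le; lra | lra]).
        apply continuity_2d_pt_mult. apply (cont_2d_negy (Bf a) s); auto. apply Bf_cont; rewrite ?Hsa; (apply Rle_lt_trans with a0; [apply Rabs_le; lra | lra]).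
        apply continuity_2d_pt_const.
    - intros x Hx. unfold W. rewrite !Rmult_0_r, HB0 by auto. simpl. lra.
    - intros x y Hy Hx HWp.
      assert (Hxr : Rabs x < R1) by lra.
      assert (Hyr : Rabs (s * y) < R1) by (rewrite Hsa, Rabs_right; lra).
      destruct (Hbnd x (s * y) Hxr Hyr) as [HP [HQ HD]].
      set (P := Pf a x (s * y)). set (Q := Qf a x (s * y)).
      set (Px := DS (dx (dx a)) x (s * y)). set (Py := DS (dy (dx a)) x (s * y)).
      set (Qy := DS (dy (dy a)) x (s * y)).
      set (B := Bf a x (s * y)).
      assert (HB : B <> 0).
      { intros HB. unfold W in HWp. fold B in HWp. rewrite HB in HWp. simpl in HWp. lra. }
      exists (s * P), Q, (exp (- K * y) * B ^ 2 * (K * Q - 4 * s * (Px + Qy))).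
      change (Rabs P < 1/2) in HP. change (1/2 < Q) in HQ. change (Rabs (Px + Qy) <= C) in HD.
      split; [|split; [lra|]].
      { rewrite Hsa. lra. }
      split.
      { apply Rmult_lt_0_compat. apply Rmult_lt_0_compat. apply exp_pos.
        simpl. rewrite Rmult_1_r. destruct (Rlt_dec 0 B). nra. assert (B < 0) by lra. nra.
        assert (Hsd : s * (Px + Qy) <= C).
        { apply Rle_trans with (Rabs (s * (Px + Qy))). apply Rle_abs. rewrite Hsa. auto. }
        unfold K. assert (0 <= C) by (eapply Rle_trans; [apply Rabs_pos| exact HD]). nra. }
      apply is_derive_Reals.
      assert (HdP := path_deriv (Pf a) x (s * y) Px Py (s * P) (s * Q) (DS_diff (dx a) r x (s * y) (ACp_dx a r Hac) ltac:(lra) ltac:(lra))).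
      assert (HdQ := path_deriv (Qf a) x (s * y) (DS (dx (dy a)) x (s * y)) Qy (s * P) (s * Q) (DS_diff (dy a) r x (s * y) (ACp_dy a r Hac) ltac:(lra) ltac:(lra))).
      rewrite dxdy in HdQ. fold Py in HdQ.
      unfold W.
      pose proof (W_deriv _ _ K y Q _ _ HdP HdQ) as HW'.
      apply (is_derive_ext _ (fun t => W (x - t * (s * P)) (y - t * Q))) in HW'.
      2: { intros t. unfold W, Bf. replace (s * (y - t * Q)) with (s * y - t * (s * Q)) by ring. reflexivity. }
      eapply is_derive_replace. exact HW'.
      simpl. replace (x - 0 * (s * P)) with x by ring. replace (s * y - 0 * (s * Q)) with (s * y) by ring.
      fold P Q. unfold B, Bf. fold P Q.
      specialize (HA x (s * y) Hxr Hyr). fold P Q Px Py Qy in HA.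
      set (E := exp (- K * y)).
      transitivity (E * (1 - P ^ 2 - Q ^ 2) ^ 2 * (K * Q - 4 * s * (Px + Qy))
        + 4 * s * E * (1 - P ^ 2 - Q ^ 2) * ((1 - P ^ 2) * Qy + 2 * P * Q * Py + (1 - Q ^ 2) * Px)).
      + ring.
      + rewrite HA. ring. }
  intros x y Hy Hx. specialize (HW x y Hy Hx). unfold W in HW.
  pose proof (exp_pos (- K * y)).
  assert (Bf a x (s * y) ^ 2 <= 0).
  { apply Rmult_le_reg_l with (exp (- K * y)); auto. lra. }
  simpl in H0. rewrite Rmult_1_r in H0. nra.
Qed.

End Back.


Lemma loc_dx (g : R -> R -> R) b r x y : ACp b r -> Rabs x < r -> Rabs y < r ->
  (forall u v, Rabs u < r -> Rabs v < r -> g u v = DS b u v) ->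
  Derive (fun t => g t y) x = DS (dx b) x y.
Proof.
  intros Hb Hx Hy Hg. rewrite (Derive_ext_loc _ (fun t => DS b t y)).
  apply is_derive_unique, (DS_is_derive_x b r); auto.
  generalize (locally_abs x r Hx). apply filter_imp. intros t Ht. apply Hg; auto.
Qed.

Lemma loc_dy (g : R -> R -> R) b r x y : ACp b r -> Rabs x < r -> Rabs y < r ->
  (forall u v, Rabs u < r -> Rabs v < r -> g u v = DS b u v) ->
  Derive (fun t => g x t) y = DS (dy b) x y.
Proof.
  intros Hb Hx Hy Hg. rewrite (Derive_ext_loc _ (fun t => DS b x t)).
  apply is_derive_unique, (DS_is_derive_y b r); auto.
  generalize (locally_abs y r Hy). apply filter_imp. intros t Ht. apply Hg; auto.
Qed.

Lemma B1_deriv (g h : R -> R) x dg dh : is_derive g x dg -> is_derive h x dh ->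
  is_derive (fun t => 1 - g t ^ 2 - h t ^ 2) x (-2 * (g x * dg + h x * dh)).
Proof.
  intros Hg Hh. auto_derive.
  split; [eexists; exact Hg| split; [eexists; exact Hh| auto]].
  change (Derive (fun x => g x) x) with (Derive g x).
  change (Derive (fun x => h x) x) with (Derive h x).
  rewrite (is_derive_unique _ _ _ Hg), (is_derive_unique _ _ _ Hh). ring.
Qed.

Lemma inner0 a r x n : ACp a r -> Rabs x < r ->
  Series (fun m => a n m * x ^ n * 0 ^ m) = a n 0%nat * x ^ n.
Proof.
  intros H Hx. assert (H0 : Rabs 0 < r) by (rewrite Rabs_R0; pose proof (Rabs_pos x); lra).
  destruct (H x 0 Hx H0) as [H1 _].
  rewrite Series_incr_1.
  - rewrite (Series_ext _ (fun _ => 0)). rewrite Series_zero. simpl; ring.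
    intros k; simpl; ring.
  - apply ex_series_Rabs. apply (ex_series_ext (fun m => Rabs (a n m) * Rabs x ^ n * Rabs 0 ^ m)); auto.
    intros; rewrite abs_term; auto.
Qed.

Lemma Rabs_lt_0 x : Rabs x < 1/2 -> 0 < 1 - x ^ 2.
Proof. intros H. apply Rabs_def2 in H. simpl. nra. Qed.

Theorem corollary2p5 (f : R -> R -> R) :
  analytic2_at0 f -> f 0 0 = 0 -> fx f 0 0 = 0 -> fy f 0 0 = 1 ->
  (germ2_zero (B_F f) <->
   (germ2_zero (A_F f) /\
    exists psi : R -> R,
      analytic1_at0 psi /\ psi 0 = 0 /\ Derive psi 0 = 0 /\
      exists eps, 0 < eps /\ forall x, Rabs x < eps ->
        f x 0 = psi x /\ fy f x 0 = sqrt (1 - (Derive psi x) ^ 2))).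
Proof.
  intros [r [a [Hr Hf]]] H00 Hfx0 Hfy0.
  assert (Hac : ACp a r) by (intros x y Hx Hy; destruct (Hf x y Hx Hy) as [H1 [H2 _]]; split; auto).
  assert (Hfeq : forall x y, Rabs x < r -> Rabs y < r -> f x y = DS a x y)
    by (intros x y Hx Hy; destruct (Hf x y Hx Hy) as [_ [_ H3]]; auto).
  assert (HP : forall x y, Rabs x < r -> Rabs y < r -> fx f x y = Pf a x y)
    by (intros; apply (loc_dx f a r); auto).
  assert (HQ : forall x y, Rabs x < r -> Rabs y < r -> fy f x y = Qf a x y)
    by (intros; apply (loc_dy f a r); auto).
  assert (HPx : forall x y, Rabs x < r -> Rabs y < r -> fxx f x y = DS (dx (dx a)) x y)
    by (intros; apply (loc_dx (fx f) (dx a) r); auto using ACp_dx).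
  assert (HPy : forall x y, Rabs x < r -> Rabs y < r -> fxy f x y = DS (dy (dx a)) x y)
    by (intros; apply (loc_dy (fx f) (dx a) r); auto using ACp_dx).
  assert (HQy : forall x y, Rabs x < r -> Rabs y < r -> fyy f x y = DS (dy (dy a)) x y)
    by (intros; apply (loc_dy (fy f) (dy a) r); auto using ACp_dy).
  assert (HAeq : forall x y, Rabs x < r -> Rabs y < r -> A_F f x y =
     (1 - Pf a x y ^ 2) * DS (dy (dy a)) x y + 2 * Pf a x y * Qf a x y * DS (dy (dx a)) x y
     + (1 - Qf a x y ^ 2) * DS (dx (dx a)) x y).
  { intros x y Hx Hy. unfold A_F. rewrite HP, HQ, HPx, HPy, HQy; auto. }
  assert (HBeq : forall x y, Rabs x < r -> Rabs y < r -> B_F f x y = Bf a x y).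
  { intros x y Hx Hy. unfold B_F, Bf. rewrite HP, HQ; auto. }
  assert (H0r : Rabs 0 < r) by (rewrite Rabs_R0; auto).
  assert (HQ0 : Qf a 0 0 = 1) by (rewrite <- HQ; auto).
  assert (HP0 : Pf a 0 0 = 0) by (rewrite <- HP; auto).
  split.
  -
    intros [eB [HeB HB]].
    set (rho := Rmin eB r).
    assert (Hrho : 0 < rho) by (apply Rmin_pos; auto).
    assert (Hre : rho <= eB) by apply Rmin_l. assert (Hrr : rho <= r) by apply Rmin_r.
    split.
    + exists rho. split; auto. intros x y Hx Hy.
      rewrite HAeq by lra.
      assert (HB0 : forall u v, Rabs u < rho -> Rabs v < rho -> Bf a u v = 0).
      { intros u v Hu Hv. rewrite <- HBeq by lra. apply HB; lra. }
      assert (Hdx : is_derive (fun t => Bf a t y) x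
         (-2 * (Pf a x y * DS (dx (dx a)) x y + Qf a x y * DS (dy (dx a)) x y))).
      { rewrite <- dxdy. unfold Bf. apply (B1_deriv (fun t => Pf a t y) (fun t => Qf a t y)); apply (DS_is_derive_x _ r); auto using ACp_dx, ACp_dy; lra. }
      assert (Hdy : is_derive (fun t => Bf a x t) y
         (-2 * (Pf a x y * DS (dy (dx a)) x y + Qf a x y * DS (dy (dy a)) x y))).
      { unfold Bf. apply (B1_deriv (fun t => Pf a x t) (fun t => Qf a x t)); apply (DS_is_derive_y _ r); auto using ACp_dx, ACp_dy; lra. }
      assert (Z1 : Derive (fun t => Bf a t y) x = 0).
      { rewrite (Derive_ext_loc _ (fun _ => 0)). apply Derive_const.
        generalize (locally_abs x rho Hx). apply filter_imp. intros t Ht. apply HB0; auto. }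
      assert (Z2 : Derive (fun t => Bf a x t) y = 0).
      { rewrite (Derive_ext_loc _ (fun _ => 0)). apply Derive_const.
        generalize (locally_abs y rho Hy). apply filter_imp. intros t Ht. apply HB0; auto. }
      assert (Z1' : -2 * (Pf a x y * DS (dx (dx a)) x y + Qf a x y * DS (dy (dx a)) x y) = 0).
      { transitivity (Derive (fun t => Bf a t y) x); [symmetry; apply is_derive_unique; exact Hdx | exact Z1]. }
      assert (Z2' : -2 * (Pf a x y * DS (dy (dx a)) x y + Qf a x y * DS (dy (dy a)) x y) = 0).
      { transitivity (Derive (fun t => Bf a x t) y); [symmetry; apply is_derive_unique; exact Hdy | exact Z2]. }
      clear Z1 Z2 Hdx Hdy.
      specialize (HB0 x y Hx Hy). unfold Bf in HB0.
      set (P := Pf a x y) in *. set (Q := Qf a x y) in *.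
      set (Px := DS (dx (dx a)) x y) in *. set (Py := DS (dy (dx a)) x y) in *.
      set (Qy := DS (dy (dy a)) x y) in *.
      transitivity ((1 - P ^ 2 - Q ^ 2) * (Px + Qy) + Q * (P * Py + Q * Qy) + P * (P * Px + Q * Py)).
      ring. rewrite HB0.
      assert (P * Px + Q * Py = 0) by lra. assert (P * Py + Q * Qy = 0) by lra.
      rewrite H, H0. ring.
    + exists (fun x => f x 0). split; [|split; [auto| split; [exact Hfx0|]]].
      * exists r, (fun n => a n 0%nat). split; auto. intros x Hx. split.
        -- unfold ex_pseries. destruct (Hac x 0 Hx H0r) as [A1 A2].
           apply (ex_series_le_R _ (fun n => Series (fun m => Rabs (a n m) * Rabs x ^ n * Rabs 0 ^ m))); auto.
           intros n. rewrite pow_n_pow. change (scal (x ^ n) (a n 0%nat)) with (x ^ n * a n 0%nat).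
           eapply Rle_trans. 2: apply (term_le_series (fun m => Rabs (a n m) * Rabs x ^ n * Rabs 0 ^ m) 0); auto.
           rewrite Rabs_mult, <- RPow_abs. simpl. lra.
           intros; rewrite <- abs_term; apply Rabs_pos.
        -- rewrite Hfeq by auto. unfold DS, PSeries. apply Series_ext; intros n.
           rewrite (inner0 a r) by auto. ring.
      * pose proof (DS_cont (dy a) r 0 0 (ACp_dy a r Hac) H0r H0r) as Hc.
        destruct (Hc (mkposreal (1/2) ltac:(lra))) as [dQ HdQ]. simpl in HdQ.
        assert (HdQ0 := cond_pos dQ).
        exists (Rmin rho dQ). split. apply Rmin_pos; auto.
        intros x Hx. split; auto.
        pose proof (Rmin_l rho dQ). pose proof (Rmin_r rho dQ).
        assert (Hxr : Rabs x < r) by lra.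
        specialize (HdQ x 0 ltac:(rewrite Rminus_0_r; lra) ltac:(rewrite Rminus_0_r, Rabs_R0; lra)).
        fold (Qf a x 0) in HdQ. fold (Qf a 0 0) in HdQ. rewrite HQ0 in HdQ. apply Rabs_def2 in HdQ.
        change (Derive (fun x0 => f x0 0) x) with (fx f x 0).
        assert (HB' : B_F f x 0 = 0) by (apply HB; rewrite ?Rabs_R0; lra).
        unfold B_F in HB'. rewrite HQ in HB' |- * by auto.
        replace (1 - fx f x 0 ^ 2) with (Qf a x 0 ^ 2) by lra.
        rewrite sqrt_pow2; auto. lra.
  -
    intros [[eA [HeA HA]] [psi [_ [_ [_ [ep [Hep Hpsi]]]]]]].
    set (Dl := fun u v => DS (dx (dx a)) u v + DS (dy (dy a)) u v).
    assert (HcP := DS_cont (dx a) r 0 0 (ACp_dx a r Hac) H0r H0r).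
    assert (HcQ := DS_cont (dy a) r 0 0 (ACp_dy a r Hac) H0r H0r).
    assert (HcD : continuity_2d_pt Dl 0 0).
    { apply continuity_2d_pt_plus; apply (DS_cont _ r); auto using ACp_dx, ACp_dy. }
    destruct (HcP (mkposreal (1/2) ltac:(lra))) as [d1 Hd1].
    destruct (HcQ (mkposreal (1/2) ltac:(lra))) as [d2 Hd2].
    destruct (HcD (mkposreal 1 ltac:(lra))) as [d3 Hd3].
    simpl in Hd1, Hd2, Hd3.
    set (R1 := Rmin (Rmin r eA) (Rmin d1 (Rmin d2 d3))).
    assert (HR1 : 0 < R1).
    { unfold R1. repeat apply Rmin_pos; auto; apply cond_pos. }
    assert (HR1r : R1 <= r) by (unfold R1; eapply Rle_trans; apply Rmin_l).
    assert (HR1e : R1 <= eA) by (unfold R1; eapply Rle_trans; [apply Rmin_l| apply Rmin_r]).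
    assert (HR1d1 : R1 <= d1) by (unfold R1; eapply Rle_trans; [apply Rmin_r| apply Rmin_l]).
    assert (HR1d2 : R1 <= d2) by (unfold R1; eapply Rle_trans; [apply Rmin_r|]; eapply Rle_trans; [apply Rmin_r| apply Rmin_l]).
    assert (HR1d3 : R1 <= d3) by (unfold R1; eapply Rle_trans; [apply Rmin_r|]; eapply Rle_trans; apply Rmin_r).
    set (C := Rabs (Dl 0 0) + 1).
    assert (Hbnd : forall x y, Rabs x < R1 -> Rabs y < R1 ->
      Rabs (Pf a x y) < 1/2 /\ 1/2 < Qf a x y /\ Rabs (DS (dx (dx a)) x y + DS (dy (dy a)) x y) <= C).
    { intros x y Hx Hy.
      assert (Ex : Rabs (x - 0) = Rabs x) by (rewrite Rminus_0_r; auto).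
      assert (Ey : Rabs (y - 0) = Rabs y) by (rewrite Rminus_0_r; auto).
      specialize (Hd1 x y ltac:(lra) ltac:(lra)). specialize (Hd2 x y ltac:(lra) ltac:(lra)).
      specialize (Hd3 x y ltac:(lra) ltac:(lra)).
      fold (Pf a x y) (Pf a 0 0) in Hd1. rewrite HP0, Rminus_0_r in Hd1.
      fold (Qf a x y) (Qf a 0 0) in Hd2. rewrite HQ0 in Hd2. apply Rabs_def2 in Hd2.
      split; auto. split. lra.
      change (Rabs (Dl x y) <= C). unfold C.
      pose proof (Rabs_triang_inv (Dl x y) (Dl 0 0)). lra. }
    assert (HA' : forall x y, Rabs x < R1 -> Rabs y < R1 ->
      (1 - Pf a x y ^ 2) * DS (dy (dy a)) x y + 2 * Pf a x y * Qf a x y * DS (dy (dx a)) x y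
      + (1 - Qf a x y ^ 2) * DS (dx (dx a)) x y = 0).
    { intros x y Hx Hy. rewrite <- HAeq by lra. apply HA; lra. }
    set (a0 := Rmin R1 ep / 2).
    assert (Ha0 : 0 < a0 < R1).
    { unfold a0. pose proof (Rmin_l R1 ep). assert (0 < Rmin R1 ep) by (apply Rmin_pos; auto). lra. }
    assert (Ha0e : a0 < ep).
    { unfold a0. pose proof (Rmin_r R1 ep). assert (0 < Rmin R1 ep) by (apply Rmin_pos; auto). lra. }
    assert (HB0 : forall x, Rabs x <= a0 -> Bf a x 0 = 0).
    { intros x Hx.
      assert (Hxr : Rabs x < R1) by lra.
      rewrite <- HBeq by lra. unfold B_F.
      destruct (Hpsi x ltac:(lra)) as [_ Hfy].
      assert (Hfxd : fx f x 0 = Derive psi x).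
      { unfold fx. apply Derive_ext_loc. generalize (locally_abs x ep ltac:(lra)). apply filter_imp.
        intros t Ht. apply Hpsi; auto. }
      rewrite Hfy, <- Hfxd.
      destruct (Hbnd x 0 Hxr ltac:(rewrite Rabs_R0; lra)) as [HPb _].
      rewrite <- HP in HPb by lra.
      rewrite pow2_sqrt. ring. left. apply Rabs_lt_0; auto. }
    exists (a0 / 2). split. lra. intros x y Hx Hy.
    rewrite HBeq by lra.
    destruct (Rle_dec 0 y) as [Hy0|Hy0].
    + rewrite Rabs_right in Hy by lra. rewrite <- (Rmult_1_l y).
      apply (side a r R1 C a0 Hac (conj HR1 HR1r) HA' Hbnd Ha0 HB0 1); [auto | lra | lra].
    + rewrite Rabs_left in Hy by lra. replace y with (-1 * (- y)) by ring.
      apply (side a r R1 C a0 Hac (conj HR1 HR1r) HA' Hbnd Ha0 HB0 (-1)); [auto | lra | lra].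
Qed.
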